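(* Let $\mathbf{K}=\omega$ be a countable set with no structure (so $G=\mathrm{Aut}(\mathbf{K})=S_\infty$), with exhaustion $\mathbf{A}_m=\{0,\dots,m-1\}$, and $H_m$ the set of injections $\mathbf{A}_m\to\omega$. Then for every $m\geq2$, the set $B'_m$ is meager in $2^{H_m}$. In particular, every $T\subseteq H_m$ with $\overline{\chi_T\cdot G}=2^{H_m}$ (these form a dense $G_\delta$ subset of $2^{H_m}$) is not in $B'_m$.
   Context: Identify subsets of $H_n$ with $2^{H_n}$ (product topology), with right $G$-action $(\chi\cdot g)(f)=\chi(g\circ f)$. A set $S\subseteq H_n$ is minimal if $\overline{\chi_S\cdot G}$ is a minimal $G$-flow (every orbit dense). $B_n$ is the Boolean algebra of subsets of $H_n$ generated by the minimal subsets of $H_n$. For $m\leq n$ and $T\subseteq H_m$, $i^n_m(T)=\{s\in H_n: s|_{\mathbf{A}_m}\in T\}$, and $B'_m=\{T\subseteq H_m:\exists n\geq m\ (i^n_m(T)\in B_n)\}$. *)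

(* Defs.v *)
From HB Require Import structures.
From mathcomp Require Import all_boot all_order all_algebra.
From mathcomp Require Import all_classical all_reals all_analysis.
Set Implicit Arguments. Unset Strict Implicit. Unset Printing Implicit Defensive.
Local Open Scope classical_set_scope.

(** K = omega with no structure; A_n = {0,...,n-1} = 'I_n. *)

Definition H (n : nat) := {f : 'I_n -> nat | injective f}.

Definition Sinf := {g : nat -> nat | bijective g}.

(** 2^{H_n} with the product topology (pointwise convergence);
    a subset S of H_n is identified with its characteristic function. *)
Definition Cantor (n : nat) := {ptws H n -> bool}.

Lemma comp_inj n (g : Sinf) (f : H n) : injective (proj1_sig g \o proj1_sig f).
Proof.
move=> i j /= e; apply: (proj2_sig f).
by apply: (bij_inj (proj2_sig g)).
Qed.

Definition compH n (g : Sinf) (f : H n) : H n :=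
  @exist _ (fun h : 'I_n -> nat => injective h) (proj1_sig g \o proj1_sig f) (@comp_inj n g f).

Definition act n (chi : Cantor n) (g : Sinf) : Cantor n :=
  (fun f : H n => chi (compH g f)) : Cantor n.

Definition Gorbit n (chi : Cantor n) : set (Cantor n) := range (act chi).

(** S is minimal: the Gorbit closure of chi_S is a minimal G-flow,
    i.e. every Gorbit in it is dense in it. *)
Definition minimal_set n (chi : Cantor n) : Prop :=
  forall y, closure (Gorbit chi) y -> closure (Gorbit y) = closure (Gorbit chi).

Inductive bool_alg_gen (X : Type) (P : set (X -> bool)) : (X -> bool) -> Prop :=
| BA_gen S : P S -> bool_alg_gen P S
| BA_empty : bool_alg_gen P (fun _ => false)
| BA_compl S : bool_alg_gen P S -> bool_alg_gen P (fun x => ~~ S x)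
| BA_union S T : bool_alg_gen P S -> bool_alg_gen P T ->
    bool_alg_gen P (fun x => S x || T x).

Definition B (n : nat) : set (Cantor n) :=
  [set chi | bool_alg_gen (minimal_set (n := n)) chi].
Arguments B : clear implicits.

Lemma restr_inj m n (le : (m <= n)%N) (s : H n) :
  injective (proj1_sig s \o widen_ord le).
Proof.
move=> i j /= /(proj2_sig s) /(congr1 val) /= e; exact: val_inj.
Qed.

Definition restr m n (le : (m <= n)%N) (s : H n) : H m :=
  @exist _ (fun h : 'I_m -> nat => injective h) (proj1_sig s \o widen_ord le) (@restr_inj m n le s).

Definition iext m n (le : (m <= n)%N) (T : Cantor m) : Cantor n :=
  (fun s : H n => T (restr le s)) : Cantor n.

Definition B' (m : nat) : set (Cantor m) :=
  [set T | exists n (le : (m <= n)%N), B n (iext le T)].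

Arguments B' : clear implicits.

Definition nowhere_dense (X : topologicalType) (A : set X) : Prop :=
  interior (closure A) = set0.

Definition meager (X : topologicalType) (A : set X) : Prop :=
  exists F : nat -> set X,
    (forall k, nowhere_dense (F k)) /\ A `<=` \bigcup_k F k.

(* Main.v *)
Require Import Defs.
From HB Require Import structures.
From mathcomp Require Import all_boot all_order all_algebra.
From mathcomp Require Import all_classical all_reals all_analysis.
From mathcomp Require Import zify.
Local Open Scope classical_set_scope.
Set Implicit Arguments. Unset Strict Implicit. Unset Printing Implicit Defensive.
Local Open Scope nat_scope.

Definition incr (a : nat -> nat) := forall i j, i < j -> a i < a j.
Definition samepat n (f g : 'I_n -> nat) := forall i j, (f i < f j) = (g i < g j).

Lemma incr_lt a i j : incr a -> (a i < a j) = (i < j).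
Proof.
move=> ha; case: (ltnP i j) => [/ha //|]; rewrite leq_eqVlt => /orP[/eqP->|/ha h].
  by rewrite ltnn.
by apply/negbTE; rewrite -leqNgt ltnW.
Qed.

Lemma incr_comp a b : incr a -> incr b -> incr (a \o b).
Proof. by move=> ha hb i j /hb /ha. Qed.

Lemma incr_succ : incr succn. Proof. by move=> i j. Qed.
Lemma incr_id : incr id. Proof. by []. Qed.

Lemma incr_inj a : incr a -> injective a.
Proof.
move=> ha i j e; case: (ltngtP i j) => // /ha; by rewrite e ltnn.
Qed.

Lemma samepat_comp n a (f : 'I_n -> nat) : incr a -> samepat (a \o f) f.
Proof. by move=> ha i j /=; rewrite incr_lt. Qed.

Lemma samepat_sym n (f g : 'I_n -> nat) : samepat f g -> samepat g f.
Proof. by move=> h i j; rewrite h. Qed.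

Lemma samepat_trans n (f g h : 'I_n -> nat) : samepat f g -> samepat g h -> samepat f h.
Proof. by move=> h1 h2 i j; rewrite h1 h2. Qed.

Lemma samepat_inj n (f g : 'I_n -> nat) : samepat f g -> injective f -> injective g.
Proof.
move=> hp hf u v e; apply: hf; case: (ltngtP (f u) (f v)) => //.
  by rewrite hp e ltnn.
by rewrite hp e ltnn.
Qed.

Definition patf n (t : 'I_n -> nat) : {ffun 'I_n * 'I_n -> bool} :=
  [ffun ij => t ij.1 < t ij.2].

Lemma patfP n (f g : 'I_n -> nat) : samepat f g <-> patf f = patf g.
Proof.
split=> [h|h i j]; first by apply/ffunP => -[i j]; rewrite !ffunE /= h.
by have := congr1 (fun F : {ffun 'I_n * 'I_n -> bool} => F (i, j)) h; rewrite !ffunE.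
Qed.

Definition rep n (P : {ffun 'I_n * 'I_n -> bool}) : 'I_n -> nat :=
  match pselect (exists t : 'I_n -> nat, injective t /\ patf t = P) with
  | left ex => proj1_sig (cid ex)
  | right _ => fun _ => 0
  end.

Lemma repP n (t : 'I_n -> nat) : injective t ->
  injective (rep (patf t)) /\ patf (rep (patf t)) = patf t.
Proof.
move=> ht; rewrite /rep; case: pselect => [ex|[]]; last by exists t.
by case: (cid ex).
Qed.

Lemma pigeon (C : finType) (tau : nat -> C) :
  exists v b, incr b /\ forall k, tau (b k) = v.
Proof.
have [v hv] : exists v, forall N, exists i, N <= i /\ tau i = v.
  apply: contrapT => hn.
  have h1 : forall v, exists N, forall i, N <= i -> tau i != v.
    move=> v; apply: contrapT => h2; apply: hn; exists v => N.
    apply: contrapT => h3; apply: h2; exists N => i Ni; apply/eqP => e.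
    by apply: h3; exists i.
  have [Nf hN] := choice h1.
  pose M := \max_v Nf v.
  by have /eqP := hN (tau M) M (@leq_bigmax C Nf (tau M)).
have [nx hnx] := choice hv.
pose b := fix b k := if k is k'.+1 then nx (b k').+1 else nx 0.
exists v, b; split; last first.
  by case=> [|k] /=; [case: (hnx 0) | case: (hnx (b k).+1)].
move=> i j; apply: (@homo_ltn nat b (fun x y => x < y)).
  by move=> ? ? ?; apply: ltn_trans.
by move=> k /=; case: (hnx (b k).+1).
Qed.

Definition ins n (j : 'I_n.+1) (x : nat) (t : 'I_n -> nat) : 'I_n.+1 -> nat :=
  fun k => if unlift j k is Some k' then t k' else x.
Definition j0 n (f : 'I_n.+1 -> nat) := [arg min_(j < ord0) f j].

Lemma j0P n (f : 'I_n.+1 -> nat) k : f (j0 f) <= f k.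
Proof. by rewrite /j0; case: arg_minnP => // i _ H; exact: H. Qed.

Lemma j0_samepat n (f g : 'I_n.+1 -> nat) : injective f -> samepat f g -> j0 f = j0 g.
Proof.
move=> hf hfg; apply/eqP; apply: contraT => ne.
have : f (j0 f) < f (j0 g).
  rewrite ltn_neqAle j0P andbT; apply/eqP => e; move: ne; by rewrite (hf _ _ e) eqxx.
rewrite hfg => lt; have := j0P g (j0 f); by rewrite leqNgt lt.
Qed.

Definition RamseyP n := forall (C : finType) (c : ('I_n -> nat) -> C),
  exists a, incr a /\ forall f g, injective f -> samepat f g -> c (a \o f) = c (a \o g).

Lemma ramsey n : RamseyP n.
Proof.
elim: n => [|n IH] C c.
  exists id; split; first exact: incr_id.
  move=> f g _ _; have -> : f = g by apply: funext => -[m hm]; exfalso; rewrite ltn0 in hm.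
  by [].
pose C' := {ffun 'I_n.+1 -> C}.
pose cs (s : nat -> nat) (t : 'I_n -> nat) : C' :=
  [ffun j => c (ins j (s 0) (s \o succn \o t))].
pose pk s := proj1_sig (cid (IH C' (cs s))).
have pkS s : incr (pk s) /\ forall f g, injective f -> samepat f g ->
    cs s (pk s \o f) = cs s (pk s \o g) := proj2_sig (cid (IH C' (cs s))).
pose step s := s \o succn \o pk s.
pose sq i := iter i step id.
pose x i := sq i 0.
have sqS i : sq i.+1 = step (sq i) by [].
have incr_sq i : incr (sq i).
  elim: i => [|i IHi]; first exact: incr_id.
  rewrite sqS /step; apply: incr_comp; first exact: incr_comp IHi incr_succ.
  exact: (proj1 (pkS _)).
have range_sq i d u : exists w, sq (i + d) u = sq i w.
  elim: d u => [|d IHd] u; first by exists u; rewrite addn0.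
  rewrite addnS sqS /step /=; exact: IHd.
have incr_x : incr x.
  move=> i j; apply: (@homo_ltn nat x (fun x y => x < y)).
    by move=> ? ? ?; apply: ltn_trans.
  move=> k; rewrite /x sqS /step /=; exact: incr_sq.
have x_range i j : i < j -> exists w, x j = sq i.+1 w.
  move=> ij; have -> : j = i.+1 + (j - i.+1) by rewrite subnKC.
  exact: range_sq.
pose tau i : {ffun 'I_n.+1 * {ffun 'I_n * 'I_n -> bool} -> C} :=
  [ffun jp => cs (sq i) (pk (sq i) \o rep jp.2) jp.1].
have [v [b [incrb hb]]] := pigeon tau.
have incrxb : incr (x \o b) by exact: incr_comp.
have key f : injective f -> c ((x \o b) \o f) = v (j0 f, patf (f \o lift (j0 f))).
  move=> hf; set j := j0 f; set i := b (f j).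
  have hlt k' : f j < f (lift j k').
    have := j0P f (lift j k'); rewrite leq_eqVlt => /orP[/eqP e|//].
    by have := neq_lift j k'; rewrite -(hf _ _ e) eqxx.
  have hw k' : exists w, x (b (f (lift j k'))) = sq i.+1 w.
    by apply: x_range; apply: incrb; exact: hlt.
  have [t ht] := choice hw.
  have eaf : (x \o b) \o f = ins j (sq i 0) (sq i.+1 \o t).
    apply: funext => k /=; rewrite /ins; case: unliftP => [k' ->|->] //=.
  have samet : samepat t (f \o lift j).
    move=> u w; rewrite -(incr_lt _ _ (incr_sq i.+1)). rewrite -!ht.
    exact: (incr_lt _ _ incrxb).
  have hinjfl : injective (f \o lift j) by move=> u w /hf /lift_inj.
  have ht_inj : injective t := samepat_inj (samepat_sym samet) hinjfl.
  have [rinj rpat] := repP ht_inj.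
  have eP : patf t = patf (f \o lift j) by apply/patfP.
  rewrite eaf.
  have -> : c (ins j (sq i 0) (sq i.+1 \o t)) = cs (sq i) (pk (sq i) \o t) j.
    by rewrite ffunE.
  rewrite (proj2 (pkS (sq i)) t (rep (patf t)) ht_inj); last first.
    by apply/patfP; rewrite rpat.
  by rewrite -eP -(hb (f j)) /tau !ffunE.
exists (x \o b); split => // f g hf hfg.
have hg := samepat_inj hfg hf.
rewrite (key f hf) (key g hg) (j0_samepat hf hfg).
congr (v (_, _)); apply/patfP => u w /=; exact: hfg.
Qed.

HB.instance Definition _ n := gen_eqMixin (H n).

Lemma coord_nbhs n (S : Cantor n) (p : H n) :
  nbhs S [set z : Cantor n | z p = S p].
Proof.
have h := @proj_continuous (H n) (fun _ => bool) p S.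
have hb : nbhs (S p) [set b : bool | b = S p].
  by apply/principal_filterP.
exact: (h _ hb).
Qed.

Lemma ptws_cvg n (F : set_system (Cantor n)) (y : Cantor n) : Filter F ->
  (forall p, (fun z : Cantor n => z p) @ F --> y p) -> F --> y.
Proof.
move=> FF h.
have := @cvg_sup _ _ (fun i => Topological.class (initial_topology (fun f : H n -> bool => f i))) F y FF.
move=> [_ hh]; apply: hh => i.
move=> A. rewrite nbhsE => -[C [oC Cy] sCA].
case: oC => B Bop eB.
have : nbhs (y i) B by rewrite nbhsE; exists B => //; split => //; rewrite -eB in Cy.
move=> /h hB. rewrite nbhs_filterE.
have hB' : F ((fun z : Cantor n => z i) @^-1` B) := hB.
apply: (filterS _ hB') => z Bz; apply: sCA; rewrite -eB; exact: Bz.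
Qed.

Lemma Heq n (s t : H n) : proj1_sig s = proj1_sig t -> s = t.
Proof. by case: s => f pf; case: t => g pg /= e; subst g; rewrite (Prop_irrelevance pf pg). Qed.

Lemma cyl_nbhs n N (S : Cantor n) (e : 'I_N -> nat) :
  nbhs S [set z : Cantor n | forall (h : 'I_n -> 'I_N) (pf : injective (e \o h)),
     z (exist _ (e \o h) pf) = S (exist _ (e \o h) pf)].
Proof.
have : \forall z \near S, forall h : {ffun 'I_n -> 'I_N},
    forall (pf : injective (e \o h)), z (exist _ (e \o h) pf) = S (exist _ (e \o h) pf).
  eapply filter_forall; first exact: (@nbhs_filter (Cantor n)).
  move=> h.
  case: (pselect (injective (e \o h))) => [pf0|npf]; last first.
    by apply: nearW => z pf; case: npf.
  apply: filterS (coord_nbhs S (exist _ (e \o h) pf0)) => z /= hz pf.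
  by rewrite (Prop_irrelevance pf pf0).
apply: filterS => z hz h pf.
have eh : e \o h = e \o [ffun x => h x] by apply: funext => x /=; rewrite ffunE.
have pf' : injective (e \o [ffun x => h x]) by rewrite -eh.
have := hz [ffun x => h x] pf'.
by have -> : exist (fun f => injective f) (e \o h) pf = exist _ (e \o [ffun x => h x]) pf' by apply: Heq.
Qed.

Lemma ev_cvg n (u : nat -> Cantor n) (y : Cantor n) :
  (forall p, exists K, forall k, K <= k -> u k p = y p) -> u @ \oo --> y.
Proof.
move=> hp; apply: ptws_cvg => p; have [K hK] := hp p.
move=> V /nbhs_singleton Vy; exists K => // k /= Kk; by rewrite hK.
Qed.

Lemma seq_closure n (A : set (Cantor n)) (u : nat -> Cantor n) (y : Cantor n) :
  (forall k, A (u k)) -> (forall p, exists K, forall k, K <= k -> u k p = y p) ->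
  closure A y.
Proof.
move=> hA hp B nB; have [K _ hK] := ev_cvg hp nB.
by exists (u K); split; [exact: hA | apply: hK => /=].
Qed.


Definition Qp n (X : H n -> bool) : Prop :=
  exists k (Phi : ('I_k -> 'I_n -> 'I_n -> bool) -> bool),
  forall N (e : 'I_N -> nat), injective e ->
  exists r : 'I_k -> 'I_N -> 'I_N,
  forall (h : 'I_n -> 'I_N) (pf : injective (e \o h)),
    X (exist _ (e \o h) pf) = Phi (fun i a b => r i (h a) < r i (h b)).

Lemma Qp_empty n : Qp (fun _ : H n => false).
Proof. by exists 0, (fun _ => false) => N e _; exists (fun _ => id). Qed.

Lemma Qp_compl n (X : H n -> bool) : Qp X -> Qp (fun x => ~~ X x).
Proof.
case=> k [Phi hX]; exists k, (fun R => ~~ Phi R) => N e he.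
have [r hr] := hX N e he; exists r => h pf; by rewrite hr.
Qed.

Lemma Qp_union n (X Y : H n -> bool) : Qp X -> Qp Y -> Qp (fun x => X x || Y x).
Proof.
case=> k1 [Phi1 hX] [k2 [Phi2 hY]].
exists (k1 + k2), (fun R => Phi1 (fun i => R (lshift k2 i)) || Phi2 (fun i => R (rshift k1 i))).
move=> N e he; have [r1 hr1] := hX N e he; have [r2 hr2] := hY N e he.
exists (fun i => match @fintype.split k1 k2 i with inl i1 => r1 i1 | inr i2 => r2 i2 end) => h pf.
rewrite hr1 hr2; congr (Phi1 _ || Phi2 _); apply: funext => i /=.
  by have -> : @fintype.split k1 k2 (lshift k2 i) = inl i := unsplitK (inl i).
by have -> : @fintype.split k1 k2 (rshift k1 i) = inr i := unsplitK (inr i).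
Qed.

Lemma rank_subproof N (v : 'I_N -> nat) (b : 'I_N) : #|[set c | v c < v b]%SET| < N.
Proof.
have : [set c | v c < v b]%SET \proper [set: 'I_N]%SET.
  rewrite properT; apply/eqP => e.
  have : b \in [set c | v c < v b]%SET by rewrite e inE.
  by rewrite inE ltnn.
by move/proper_card; rewrite cardsT card_ord.
Qed.

Definition rank N (v : 'I_N -> nat) (b : 'I_N) : 'I_N := Ordinal (rank_subproof v b).


Lemma rank_lt N (v : 'I_N -> nat) b c : v b < v c -> rank v b < rank v c.
Proof.
move=> lt; apply: (@proper_card _ [set x | v x < v b]%SET [set x | v x < v c]%SET); apply/properP; split.
  by apply/fintype.subsetP => x; rewrite !inE => /ltn_trans; apply.
by exists b; rewrite !inE ?ltnn.
Qed.

Lemma rank_ltE N (v : 'I_N -> nat) b c : injective v ->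
  (rank v b < rank v c) = (v b < v c).
Proof.
move=> hv; case: (ltngtP (v b) (v c)) => h.
- exact: rank_lt.
- by apply/negbTE; rewrite -leqNgt ltnW // rank_lt.
- by rewrite (hv _ _ h) ltnn.
Qed.

Definition tr (u v w : nat) : nat := if w == u then v else if w == v then u else w.

Lemma trK u v : involutive (tr u v).
Proof.
move=> w; rewrite /tr.
have [->|nu] := eqVneq w u; first by rewrite eqxx; case: eqVneq.
have [->|nv] := eqVneq w v; first by rewrite eqxx.
by rewrite (negbTE nu) (negbTE nv).
Qed.

Fixpoint gk (a : nat -> nat) (k : nat) : nat -> nat :=
  if k is k'.+1 then tr (gk a k' k') (a k') \o gk a k' else id.

Lemma bij_gk a k : bijective (gk a k).
Proof.
elim: k => [|k IH] /=; first by exists id.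
apply: bij_comp => //; exact: (Bijective (trK _ _) (trK _ _)).
Qed.

Lemma gk_agree a k i : injective a -> i < k -> gk a k i = a i.
Proof.
move=> ha; elim: k i => [|k IH] i //= ik.
rewrite ltnS leq_eqVlt in ik; case/orP: ik => [/eqP ->|ik].
  by rewrite /tr eqxx.
rewrite /tr [gk a k i]IH //.
have [e|ne] := eqVneq (a i) (gk a k k).
  move: e; rewrite -IH // => /(bij_inj (bij_gk a k)) e; by rewrite e ltnn in ik.
case: eqP => [e|_] //.
by move: (ha _ _ e) => e'; rewrite e' ltnn in ik.
Qed.

Lemma act_id n (S : Cantor n) (pf : bijective (@id nat)) : act S (exist _ id pf) = S.
Proof. by apply: funext => s; rewrite /act; congr S; apply: Heq. Qed.

Lemma min_Q n (S : Cantor n) : minimal_set S -> Qp S.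
Proof.
move=> hmin.
pose c (f : 'I_n -> nat) : bool :=
  match pselect (injective f) with left pf => S (exist _ f pf) | right _ => false end.
have cE f (pf : injective f) : c f = S (exist _ f pf).
  by rewrite /c; case: pselect => [pf'|//]; rewrite (Prop_irrelevance pf' pf).
have [a [ia ha]] := ramsey c.
have ainj := incr_inj ia.
pose y : Cantor n := fun s => S (exist _ (a \o proj1_sig s) (inj_comp ainj (proj2_sig s))).
have yclo : closure (Gorbit S) y.
  apply: (@seq_closure _ _ (fun k => act S (exist _ (gk a k) (bij_gk a k)))).
    by move=> k; exists (exist _ (gk a k) (bij_gk a k)).
  move=> s; exists (\max_(i < n) proj1_sig s i).+1 => k Kk.
  rewrite /act /y; congr S; apply: Heq => /=; apply: funext => i /=.
  apply: gk_agree => //; apply: leq_trans Kk; rewrite ltnS.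
  exact: (@leq_bigmax _ (fun i => proj1_sig s i) i).
have Sclo : closure (Gorbit y) S.
  rewrite (hmin y yclo); apply: subset_closure.
  have pid : bijective (@id nat) by exists id.
  by exists (exist _ id pid) => //; rewrite act_id.
pose Phi (R : 'I_1 -> 'I_n -> 'I_n -> bool) : bool :=
  c (a \o rep [ffun ij : 'I_n * 'I_n => R ord0 ij.1 ij.2]).
exists 1, Phi => N e einj.
have [z [[g _ <-] hz]] := Sclo _ (cyl_nbhs S e).
pose v := proj1_sig g \o e.
have vinj : injective v := inj_comp (bij_inj (proj2_sig g)) einj.
exists (fun _ => rank v) => h pf.
rewrite -hz /act /y /=.
have f0inj : injective (v \o h) by exact: inj_comp vinj (inj_compr pf).
transitivity (c (a \o (v \o h))).
  by rewrite (cE _ (inj_comp ainj f0inj)); congr S; apply: Heq.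
rewrite /Phi.
have -> : [ffun ij : 'I_n * 'I_n => rank v (h ij.1) < rank v (h ij.2)] = patf (v \o h).
  by apply/ffunP => ij; rewrite !ffunE /= rank_ltE.
have [rinj rpat] := repP f0inj.
apply: ha => //; apply/patfP; by rewrite rpat.
Qed.

Lemma Qp_BA n (X : H n -> bool) : bool_alg_gen (minimal_set (n:=n)) X -> Qp X.
Proof.
elim => [S hS|| S _ IH| S T _ IH1 _ IH2].
- exact: min_Q.
- exact: Qp_empty.
- exact: Qp_compl.
- exact: Qp_union.
Qed.

Lemma sq_le_pow j : 4 <= j -> j * j <= 2 ^ j.
Proof.
elim: j => // j IH; rewrite leq_eqVlt => /orP[/eqP <-|hj] //.
have := IH hj; rewrite expnS; nia.
Qed.

Lemma exp_mono a b e : a <= b -> a ^ e <= b ^ e.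
Proof. by move=> ab; elim: e => // e IH; rewrite !expnS leq_mul. Qed.

Lemma arith n k : exists N, n <= N /\
  ((N + N + N).+1 ^ (N + N + N).+1) ^ k < 2 ^ (N * N).
Proof.
pose j := n + 4 * k + 8; exists (2 ^ j).
have jX : j * j <= 2 ^ j by apply: sq_le_pow; rewrite /j; lia.
have jlt : j < 2 ^ j by apply: ltn_expl.
set X := 2 ^ j in jX jlt *.
split; first by rewrite /j in jlt; lia.
have X4 : 2 ^ j.+2 = 4 * X by rewrite !expnS /X; lia.
have M1le : (X + X + X).+1 <= 2 ^ j.+2 by rewrite X4; lia.
apply: (@leq_ltn_trans (((2 ^ j.+2) ^ (2 ^ j.+2)) ^ k)).
  apply: exp_mono; apply: (@leq_trans ((2 ^ j.+2) ^ (X + X + X).+1)).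
    exact: exp_mono.
  by apply: leq_pexp2l; rewrite ?expn_gt0.
rewrite -!expnM ltn_exp2l // X4.
have : 4 * k * (j + 2) < j * j by rewrite /j; nia.
move=> h; nia.
Qed.

Definition Pts N := 'I_(N + N + N).+1.

Definition PG m (i0 i1 : 'I_m) N (G : {ffun 'I_N * 'I_N -> bool}) (h : 'I_m -> Pts N) : bool :=
  [exists q : 'I_N * 'I_N, [&& nat_of_ord (h i0) == nat_of_ord q.1, nat_of_ord (h i1) == N + nat_of_ord q.2 & G q]].

Definition realizes m (i0 i1 : 'I_m) (T : Cantor m) N (G : {ffun 'I_N * 'I_N -> bool}) : Prop :=
  exists e : Pts N -> nat, injective e /\
    forall (h : 'I_m -> Pts N) (pf : injective (e \o h)),
      T (exist _ (e \o h) pf) = PG i0 i1 G h.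
Arguments realizes {m} i0 i1 T N G.

Lemma count_real m (i0 i1 : 'I_m) (h0 : nat_of_ord i0 = 0) (h1 : nat_of_ord i1 = 1) n (le : m <= n)
  (T : Cantor m) : Qp (iext le T) -> exists N G, ~ realizes i0 i1 T N G.
Proof.
case=> k [Phi hQ].
have [N [nN ineq]] := arith n k.
exists N; apply: contrapT => hall.
have hall' G : realizes i0 i1 T N G.
  by apply: contrapT => nr; apply: hall; exists G.
have [eG heG] := choice hall'.
have [rG hrG] := choice (fun G => hQ _ (eG G) (proj1 (heG G))).
pose F G : {ffun 'I_k -> {ffun Pts N -> Pts N}} := [ffun i => [ffun b => rG G i b]].
have Finj : injective F.
  move=> G G' eF; apply/ffunP => q.
  pose hq (i : 'I_n) : Pts N := inord (if nat_of_ord i == 0 then nat_of_ord q.1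
    else if nat_of_ord i == 1 then N + nat_of_ord q.2 else N + N + nat_of_ord i).
  have hqval i : nat_of_ord (hq i) = (if nat_of_ord i == 0 then nat_of_ord q.1
    else if nat_of_ord i == 1 then N + nat_of_ord q.2 else N + N + nat_of_ord i).
    rewrite /hq inordK //; move: (ltn_ord i) (ltn_ord q.1) (ltn_ord q.2).
    case: eqP => _; first lia; case: eqP => _; lia.
  have hqinj : injective hq.
    move=> i j /(congr1 (@nat_of_ord _)); rewrite !hqval => e; apply: ord_inj.
    move: e (ltn_ord i) (ltn_ord j) (ltn_ord q.1) (ltn_ord q.2).
    case: (nat_of_ord i =P 0); case: (nat_of_ord j =P 0); case: (nat_of_ord i =P 1); case: (nat_of_ord j =P 1); lia.
  have key (G0 : {ffun 'I_N * 'I_N -> bool}) : G0 q = Phi (fun i a b => rG G0 i (hq a) < rG G0 i (hq b)).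
    have pf : injective (eG G0 \o hq) := inj_comp (proj1 (heG G0)) hqinj.
    rewrite -(hrG G0 hq pf) /iext.
    have pf' : injective (eG G0 \o (hq \o widen_ord le)) by exact: (proj2_sig (restr le (exist _ _ pf))).
    transitivity (T (exist _ (eG G0 \o (hq \o widen_ord le)) pf')); last first.
      by congr T; apply: Heq.
    rewrite (proj2 (heG G0)) /PG; apply/idP/existsP => [Gq|[q' /and3P[/eqP e1 /eqP e2 Gq']]].
      by exists q; rewrite /= !hqval /= h0 h1 /= !eqxx.
    move: e1 e2; rewrite /= !hqval /= h0 h1 /= => e1 e2.
    have -> : q = q'.
      case: q q' e1 e2 {hq hqval hqinj pf pf'} Gq' => [a b] [a' b'] /= e1 e2 _.
      by congr pair; apply: ord_inj => //=; lia.
    exact: Gq'.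
  rewrite !key; congr Phi; apply: funext => i; apply: funext => a; apply: funext => b.
  have := congr1 (fun f : {ffun 'I_k -> {ffun Pts N -> Pts N}} => (f i (hq a), f i (hq b))) eF.
  by rewrite /= !ffunE => -[-> ->].
have := leq_card F Finj.
rewrite !card_ffun card_prod card_bool !card_ord.
by rewrite leqNgt ineq.
Qed.

Definition plant m (i0 i1 : 'I_m) N (G : {ffun 'I_N * 'I_N -> bool}) (T : Cantor m)
  (k : nat) : Cantor m := fun s =>
  if [forall i, (k <= proj1_sig s i) && (proj1_sig s i < k + (N + N + N).+1)]
  then PG i0 i1 G (fun i => inord (proj1_sig s i - k)) else T s.

Lemma plant_realizes m (i0 i1 : 'I_m) N G T k : realizes i0 i1 (plant i0 i1 G T k) N G.
Proof.
exists (fun q : Pts N => k + nat_of_ord q); split.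
  by move=> a b /addnI /ord_inj.
move=> h pf; rewrite /plant /=.
have -> : [forall i, (k <= k + nat_of_ord (h i)) && (k + nat_of_ord (h i) < k + (N + N + N).+1)].
  by apply/forallP => i; rewrite leq_addr ltn_add2l ltn_ord.
congr PG; apply: funext => i; rewrite addKn; exact: inord_val.
Qed.

Lemma plant_ev m (i0 i1 : 'I_m) N G T (s : H m) :
  exists K, forall k, K <= k -> plant i0 i1 (N:=N) G T k s = T s.
Proof.
exists (\max_(i < m) proj1_sig s i).+1 => k Kk; rewrite /plant.
case: forallP => // /(_ i0) /andP[ks _].
have := @leq_bigmax _ (fun i => proj1_sig s i) i0.
move=> hle; have := leq_trans ks hle; rewrite leqNgt.
by rewrite (leq_trans _ Kk).
Qed.

Lemma Fnd m (i0 i1 : 'I_m) N G :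
  nowhere_dense [set T : Cantor m | ~ realizes i0 i1 T N G].
Proof.
set F := [set T : Cantor m | ~ realizes i0 i1 T N G].
have cl : closure F `<=` F.
  move=> T clT [e [einj he]].
  have [z [Fz hz]] := clT _ (cyl_nbhs T e).
  by apply: Fz; exists e; split => // h pf; rewrite hz he.
apply/seteqP; split => // T hT.
have hp : forall p, exists K, forall k, K <= k -> plant i0 i1 G T k p = T p.
  move=> p; exact: plant_ev.
have [K _ hK] := ev_cvg hp hT.
by apply: (cl _ (hK K (leqnn K))); apply: plant_realizes.
Qed.

Unset Implicit Arguments.
Theorem mainTheorem6 (m : nat) (hm : (2 <= m)%N) :
  meager (B' m) /\
  (forall T : Cantor m, closure (Gorbit T) = setT -> ~ B' m T).
Proof.
pose i0 : 'I_m := Ordinal (ltnW hm).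
pose i1 : 'I_m := Ordinal hm.
have B'real T : B' m T -> exists N G, ~ realizes i0 i1 T N G.
  case=> n [le hB]; apply: (@count_real m i0 i1 erefl erefl n le T); exact: Qp_BA.
split.
  pose idx := {N : nat & {ffun 'I_N * 'I_N -> bool}}.
  pose d : idx := Tagged (fun N => {ffun 'I_N * 'I_N -> bool}) ([ffun => false] : {ffun 'I_0 * 'I_0 -> bool}).
  pose F k : set (Cantor m) := let p := odflt d (unpickle k) in
    [set T | ~ realizes i0 i1 T (tag p) (tagged p)].
  exists F; split; first by move=> k; exact: Fnd.
  move=> T /B'real [N [G nr]].
  exists (pickle (Tagged (fun N => {ffun 'I_N * 'I_N -> bool}) G : idx)) => //.
  by rewrite /F pickleK.
move=> T dense hB; have [N [G nr]] := B'real T hB; apply: nr.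
have [e0 [e0inj he0]] := plant_realizes i0 i1 G T 0.
have zc : closure (Gorbit T) (plant i0 i1 G T 0) by rewrite dense.
have [w [[g _ <-] hw]] := zc _ (cyl_nbhs (plant i0 i1 G T 0) e0).
exists (proj1_sig g \o e0); split.
  exact: inj_comp (bij_inj (proj2_sig g)) e0inj.
move=> h pf; have pf0 : injective (e0 \o h) := inj_comp e0inj (inj_compr pf).
rewrite -(he0 h pf0) -(hw h pf0) /act; congr T; exact: Heq.
Qed.
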